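(* Let $n \geq 2$ be a power of 2. Then $\mathrm{spar}(\mathsf{ADDR}_n) = n^{\log 3}$.
   Context: $\mathsf{ADDR}_n:\{0,1\}^{\log n+n}\to\{0,1\}$ is $\mathsf{ADDR}_n(x,y)=y_{\mathsf{bin}(x)}$ for $x\in\{0,1\}^{\log n}$, $y\in\{0,1\}^n$, where $\mathsf{bin}(x)\in[n]$ is the integer whose binary representation is $x$. $\mathrm{spar}(f)$ (M\''obius sparsity) is the number of nonzero coefficients in the unique expansion $f=\sum_S\widetilde f(S)\prod_{i\in S}z_i$ with real coefficients. Logarithms are base 2. *)

(* Defs.v *)
From HB Require Import structures.
From mathcomp Require Import all_boot all_order all_algebra.
From mathcomp Require Import reals exp.
Set Implicit Arguments. Unset Strict Implicit. Unset Printing Implicit Defensive.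
Import Order.TTheory GRing.Theory Num.Theory.
Local Open Scope ring_scope.

Definition cube (m : nat) := {ffun 'I_m -> bool}.

Definition bin (k : nat) (x : 'I_k -> bool) : nat := (\sum_(i < k) x i * 2 ^ i)%N.

(* ADDR on {0,1}^(k + n): first k bits are the address x, last n bits are y;
   output y_{bin(x)} (0-indexed). When bin(x) >= n (impossible if n = 2^k)
   we return false. *)
Definition ADDR (k n : nat) (z : cube (k + n)) : bool :=
  let x := fun i : 'I_k => z (lshift n i) in
  let y := fun j : 'I_n => z (rshift k j) in
  if insub (bin x) is Some j then y j else false.

Definition monomial (R : realType) (m : nat) (S : {set 'I_m}) (z : cube m) : R :=
  \prod_(i in S) (z i)%:R.

Definition moebius_expansion (R : realType) (m : nat) (f : cube m -> bool)
  (c : {set 'I_m} -> R) : Prop :=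
  forall z : cube m, ((f z)%:R : R) = \sum_(S : {set 'I_m}) c S * monomial R S z.

Definition nnz (R : realType) (m : nat) (c : {set 'I_m} -> R) : nat :=
  #|[set S : {set 'I_m} | c S != 0]|.

Definition log2 (R : realType) (x : R) : R := ln x / ln 2.

(* Main.v *)
Require Import Defs.
From HB Require Import structures.
From mathcomp Require Import all_boot all_order all_algebra.
From mathcomp Require Import reals exp.
From mathcomp Require Import zify.
Import Order.TTheory GRing.Theory Num.Theory.
Local Open Scope ring_scope.

Lemma bin_lt k (a : 'I_k -> bool) : (bin a < 2 ^ k)%N.
Proof.
elim: k a => [|k IH] a; first by rewrite /bin big_ord0.
rewrite /bin big_ord_recr /=.
have := IH (fun i => a (widen_ord (leqnSn k) i)); rewrite /bin => h.
rewrite expnS mul2n -addnn; apply: leq_trans (_ : (2^k + a ord_max * 2^k <= _)%N).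
  by rewrite ltn_add2r.
by rewrite leq_add2l; case: (a ord_max); rewrite ?mul1n ?mul0n.
Qed.

Lemma bin_inj k (a b : 'I_k -> bool) : bin a = bin b -> forall i, a i = b i.
Proof.
elim: k a b => [|k IH] a b; first by move=> _ [].
rewrite /bin !big_ord_recr /=.
have ha := @bin_lt _ (fun i => a (widen_ord (leqnSn k) i)).
have hb := @bin_lt _ (fun i => b (widen_ord (leqnSn k) i)).
rewrite /bin in ha hb.
move=> e.
have hmax : a ord_max = b ord_max.
  move: e ha hb.
  case: (a ord_max); case: (b ord_max) => //= e; lia.
move=> i.
have e2 := e; rewrite hmax in e2; move/addIn: e2 => e2.
have := IH _ _ e2.
case: (ltnP i k) => hi.
  move=> /(_ (Ordinal hi)) /=.
  by have -> : widen_ord (leqnSn k) (Ordinal hi) = i by apply: val_inj.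
move=> _; have -> : i = ord_max by apply: val_inj => /=; have := ltn_ord i; lia.
exact: hmax.
Qed.

Definition bf k := {ffun 'I_k -> bool}.

Definition gS k n (A T : bf k) : {set 'I_(k + n)} :=
  [set s | match split s with inl i => T i | inr j => (j : nat) == bin A end].

Definition cf (R : realType) (a t : bool) : R :=
  if a then (if t then 1 else 0) else (if t then -1 else 1).

Definition coef (R : realType) k (A T : bf k) : R := \prod_i cf R (A i) (T i).

Definition c0 (R : realType) k n (S : {set 'I_(k + n)}) : R :=
  \sum_(p : bf k * bf k) (if S == gS k n p.1 p.2 then coef R k p.1 p.2 else 0).

Lemma split_l k n (i : 'I_k) : split (lshift n i) = inl i.
Proof. exact: (unsplitK (inl i)). Qed.
Lemma split_r k n (j : 'I_n) : split (rshift k j) = inr j.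
Proof. exact: (unsplitK (inr j)). Qed.

Lemma mon_g (R : realType) k n (A T : bf k) (j0 : 'I_n) (z : cube (k + n)) :
  (j0 : nat) = bin A ->
  monomial R (gS k n A T) z =
  (\prod_i (if T i then (z (lshift n i))%:R else 1)) * (z (rshift k j0))%:R.
Proof.
move=> hj; rewrite /monomial big_mkcond big_split_ord /=; congr (_ * _).
  by apply: eq_bigr => i _; rewrite inE split_l.
rewrite (bigD1 j0) //= inE split_r hj eqxx big1 ?mulr1 // => j hj1.
rewrite inE split_r -hj; case: eqP => // e; case/eqP: hj1; exact: val_inj.
Qed.

Lemma mon_ind (R : realType) m (S T : {set 'I_m}) :
  monomial R T [ffun i => i \in S] = (T \subset S)%:R.
Proof.
rewrite /monomial; case: (boolP (T \subset S)) => h.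
  by apply: big1 => i iT; rewrite ffunE (subsetP h i iT).
have [i iT iS] := subsetPn h.
by rewrite (bigD1 i) //= ffunE (negbTE iS) mul0r.
Qed.

Lemma expansion_unique (R : realType) m (f : cube m -> bool) (c d : {set 'I_m} -> R) :
  moebius_expansion f c -> moebius_expansion f d -> forall S, c S = d S.
Proof.
move=> hc hd.
pose e S := c S - d S.
have he : forall z : cube m, \sum_S e S * monomial R S z = 0.
  move=> z; rewrite /e.
  under eq_bigr do rewrite mulrBl.
  by rewrite sumrB -hc -hd subrr.
suff : forall N (S : {set 'I_m}), (#|S| < N)%N -> e S = 0.
  by move=> H S; apply/eqP; rewrite -subr_eq0; apply/eqP; exact: (H _.+1 S).
elim=> [|N IH] S hS //.
move: (he [ffun i => i \in S]).
under eq_bigr do rewrite mon_ind.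
move=> H; rewrite (bigID (fun T : {set 'I_m} => T \subset S)) /= in H.
rewrite [X in _ + X]big1 ?addr0 in H; last first.
  by move=> T /negbTE ->; rewrite mulr0.
rewrite (bigD1 S) //= big1 ?addr0 ?subxx ?mulr1 // in H.
move=> T /andP [TS TnS]; rewrite TS mulr1; apply: IH.
have : T \proper S by rewrite properEneq TnS TS.
move/proper_card; lia.
Qed.

Lemma indic_prod (R : realType) k (A xf : bf k) :
  \prod_i (if A i then (xf i)%:R else 1 - (xf i)%:R) = ((A == xf)%:R : R).
Proof.
case: eqP => [->|ne].
  by apply: big1 => i _; case: (xf i); rewrite ?subr0.
case: (pickP (fun i => A i != xf i)) => [i hi|h]; last first.
  by case: ne; apply/ffunP => i; move: (h i) => /negbFE/eqP.
rewrite (bigD1 i) //=; move: hi; case: (A i); case: (xf i) => //= _;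
  by rewrite ?subrr mul0r.
Qed.

Lemma c0_expansion (R : realType) k :
  moebius_expansion (@ADDR k (2 ^ k)) (c0 R k (2 ^ k)).
Proof.
move=> z; rewrite /c0.
under eq_bigr do rewrite big_distrl /=.
rewrite exchange_big /=.
under eq_bigr => p _.
  under eq_bigr => S _ do rewrite (fun_if (fun x => x * _)) mul0r.
  rewrite -big_mkcond /= (big_pred1_eq).
  over.
rewrite -(pair_bigA _ (fun A T => coef R k A T * monomial R (gS k (2 ^ k) A T) z)) /=.
under eq_bigr => A _.
  under eq_bigr => T _ do rewrite (@mon_g R k (2^k) A T (Ordinal (bin_lt k A))) // mulrA.
  rewrite -big_distrl /=.
  under eq_bigr => T _ do rewrite /coef -big_split /=.
  rewrite -(bigA_distr_bigA (fun i t => cf R (A i) t * (if t then (z (lshift (2 ^ k) i))%:R else 1))) /=.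
  under eq_bigr => i _ do rewrite big_bool /=.
  have -> : \prod_(i < k) (cf R (A i) true * (z (lshift (2 ^ k) i))%:R + cf R (A i) false * 1)
     = \prod_i (if A i then ([ffun i => z (lshift (2 ^ k) i)] i)%:R
                 else 1 - ([ffun i => z (lshift (2 ^ k) i)] i)%:R).
    apply: eq_bigr => i _; rewrite ffunE /cf; case: (A i) => /=.
      by rewrite mul1r mul0r addr0.
    by rewrite mulN1r mulr1 addrC.
  rewrite indic_prod.
  over.
rewrite /= (bigD1 [ffun i => z (lshift (2 ^ k) i)]) //= eqxx mul1r big1 ?addr0; last first.
  by move=> A /negbTE ->; rewrite mul0r.
rewrite /ADDR.
have hb : bin [ffun i => z (lshift (2 ^ k) i)] = bin (fun i => z (lshift (2 ^ k) i)).
  by apply: eq_bigr => i _; rewrite ffunE.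
have hlt := bin_lt k (fun i => z (lshift (2 ^ k) i)).
rewrite (insubT (fun x => x < 2 ^ k)%N hlt) /=.
by congr ((z (rshift k _))%:R); apply: val_inj.
Qed.

Lemma gp_inj k : injective (fun p : bf k * bf k => gS k (2 ^ k) p.1 p.2).
Proof.
move=> [A T] [A' T'] /= e.
have eT : T = T'.
  apply/ffunP => i; move/setP: e => /(_ (lshift (2 ^ k) i)).
  by rewrite !inE !split_l.
have eA : A = A'.
  apply/ffunP => i; apply: (@bin_inj k A A') => //.
  move/setP: e => /(_ (rshift k (Ordinal (bin_lt k A)))).
  by rewrite !inE !split_r /= eqxx => /esym/eqP.
by rewrite eT eA.
Qed.

Lemma c0_gp (R : realType) k (p : bf k * bf k) :
  c0 R k (2 ^ k) (gS k (2 ^ k) p.1 p.2) = coef R k p.1 p.2.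
Proof.
rewrite /c0 (bigD1 p) //= eqxx big1 ?addr0 // => q hq.
case: eqP => // e; by move: (@gp_inj k _ _ e) hq => ->; rewrite eqxx.
Qed.

Lemma c0_out (R : realType) k S :
  (forall p : bf k * bf k, S != gS k (2 ^ k) p.1 p.2) -> c0 R k (2 ^ k) S = 0.
Proof. by move=> h; apply: big1 => p _; rewrite (negbTE (h p)). Qed.

Lemma coef_neq0 (R : realType) k (A T : bf k) :
  (coef R k A T != 0) = [forall i, A i ==> T i].
Proof.
case: (boolP [forall i, A i ==> T i]) => h.
  rewrite /coef; apply/prodf_neq0 => i _; move/forallP: h => /(_ i).
  by rewrite /cf; case: (A i); case: (T i) => //= _; rewrite ?oppr_eq0 oner_eq0.
move: h; rewrite negb_forall => /existsP [i hi].
rewrite /coef (bigD1 i) //=; move: hi; rewrite /cf.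
by case: (A i); case: (T i) => //= _; rewrite mul0r eqxx.
Qed.

Lemma forall_prod k (P : 'I_k -> bool) : ([forall i, P i] : nat) = (\prod_i (P i : nat))%N.
Proof.
case: (boolP [forall i, P i]) => h.
  by rewrite big1 // => i _; rewrite (forallP h i).
move: h; rewrite negb_forall => /existsP [i hi].
by rewrite (bigD1 i) //= (negbTE hi) mul0n.
Qed.

Lemma nnz_c0 (R : realType) k : nnz (c0 R k (2 ^ k)) = (3 ^ k)%N.
Proof.
rewrite /nnz.
pose P := [set p : bf k * bf k | coef R k p.1 p.2 != 0].
have -> : [set S | c0 R k (2 ^ k) S != 0] =
          (fun p : bf k * bf k => gS k (2 ^ k) p.1 p.2) @: P.
  apply/setP => S; rewrite inE; apply/idP/imsetP.
    case: (pickP (fun p : bf k * bf k => S == gS k (2 ^ k) p.1 p.2)) => [p /eqP -> | h].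
      by rewrite c0_gp => hp; exists p; rewrite // inE.
    by rewrite c0_out ?eqxx // => p; rewrite h.
  by move=> [p hp ->]; rewrite c0_gp; move: hp; rewrite inE.
rewrite card_imset; last exact: gp_inj.
rewrite -sum1_card big_mkcond /=.
have -> : (\sum_i (if i \in P then 1 else 0))%N =
          (\sum_(p : bf k * bf k) \prod_i ((p.1 i ==> p.2 i) : nat))%N.
  apply: eq_bigr => p _; rewrite inE coef_neq0 -forall_prod; by case: [forall _, _].
rewrite -(pair_bigA _ (fun A T : bf k => \prod_i ((A i ==> T i) : nat))%N) /=.
under eq_bigr => A _.
  rewrite -(bigA_distr_bigA (fun i t => ((A i ==> t) : nat))) /=.
  under eq_bigr => i _ do rewrite big_bool /=.
  over.
rewrite /= -(bigA_distr_bigA (fun i a => ((a ==> true) + (a ==> false) : nat))%N) /=.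
under eq_bigr => i _ do rewrite big_bool /=.
by rewrite prod_nat_const card_ord.
Qed.

Theorem claimA3 (R : realType) (n k : nat) (hn : (2 <= n)%N) (hk : n = (2 ^ k)%N) :
  (exists c : {set 'I_(k + n)} -> R, moebius_expansion (@ADDR k n) c) /\
  (forall c : {set 'I_(k + n)} -> R, moebius_expansion (@ADDR k n) c ->
     (nnz c)%:R = powR (n%:R : R) (log2 (3 : R))).
Proof.
subst n.
split; first by exists (c0 R k (2 ^ k)); exact: c0_expansion.
move=> c hc.
have e : nnz c = nnz (c0 R k (2 ^ k)).
  rewrite /nnz; congr #|pred_of_set _|; apply/setP => S.
  by rewrite !inE (@expansion_unique _ _ _ _ _ hc (c0_expansion R k)).
rewrite e nnz_c0 /powR /log2 !natrX.
have h2 : (0 : R) < 2%:R by rewrite ltr0n.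
rewrite gt_eqF ?exprn_gt0 // lnXn //.
have l2 : ln (2%:R : R) != 0 by rewrite gt_eqF // ln_gt0 // ltr1n.
have -> : ln 3 / ln 2%:R * (ln (2%:R : R) *+ k) = ln (3 : R) * k%:R.
  rewrite -(mulr_natr (ln (2%:R : R)) k) mulrA.
  by rewrite (divfK l2).
by rewrite expRM_natr lnK // posrE ltr0n.
Qed.
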